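(* Let $R$ be a finite chain ring, $r\ge1$, and let $A=\bigcup_{i=1}^lA_i\subseteq R$ be a well-conditioned set partitioned into $l$ blocks with $|A_i|=r+1$, so $n=|A|=(r+1)l$. Assume there is $g\in\mathcal F_A$ of degree $r+1$ such that $1,g,\dots,g^{l-1}$ span $\mathcal F_A$ as an $R$-module. Let $\mathcal F_A^r=\bigoplus_{i=0}^{r-1}\mathcal F_A\,x^i$, let $K=rt$ with $1\le t\le l$, and let $\Phi:R^K\to\mathcal F_A^r$, $a\mapsto f_a$, be an injective $R$-linear map. Let $\mathcal C=\{(f_a(\alpha))_{\alpha\in A}: a\in R^K\}$. Then $\mathcal C$ is a free $R$-linear code of length $n$ and rank $K$, each coordinate $\alpha\in A_j$ can be recovered from the coordinates in $A_j\setminus\{\alpha\}$ (so $\mathcal C$ has locality $r$), and its minimum distance satisfies $$d\ \ge\ n-\max_{a\in R^K\setminus\{0\}}\deg f_a .$$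
   Context: A finite chain ring is a finite commutative local ring whose ideals are totally ordered by inclusion; $N(R)$ is its unit group. A subset $T\subseteq N(R)$ is subtractive if $a-b\in N(R)$ for all distinct $a,b\in T$. A set $\{a_1,\dots,a_n\}\subseteq R$ is well-conditioned if either it is a subtractive subset of $N(R)$, or for some $i$ the set without $a_i$ is a subtractive subset of $N(R)$ and $a_i$ is a zero divisor (or $0$). For a partition $A=\bigcup_i A_i$, $\mathcal F_A=\{f\in R[x]:\deg f<|A|,\ f$ constant on each $A_i\}$. *)

(* Defs.v *)
From HB Require Import structures.
From mathcomp Require Import all_boot all_order all_algebra.
Set Implicit Arguments. Unset Strict Implicit. Unset Printing Implicit Defensive.
Import Order.TTheory GRing.Theory Num.Theory.
Local Open Scope ring_scope.

Section ChainRing.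
Variable R : finComUnitRingType.

Definition is_ideal (I : {set R}) : Prop :=
  [/\ 0 \in I,
      (forall x y, x \in I -> y \in I -> x + y \in I) &
      (forall c x, x \in I -> c * x \in I)].

Definition is_maximal_ideal (M : {set R}) : Prop :=
  [/\ is_ideal M, M != [set: R] &
      forall J, is_ideal J -> M \subset J -> J = M \/ J = [set: R]].

Definition local_ring : Prop :=
  exists M, is_maximal_ideal M /\ forall M', is_maximal_ideal M' -> M' = M.

(* finite chain ring: finite commutative local ring whose ideals are totally
   ordered by inclusion (finiteness and commutativity come from the type) *)
Definition chain_ring : Prop :=
  local_ring /\
  forall I J, is_ideal I -> is_ideal J -> I \subset J \/ J \subset I.

Definition zero_divisor (a : R) : Prop := exists2 b, b != 0 & a * b = 0.

Definition subtractive (T : {set R}) : Prop :=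
  (forall a, a \in T -> a \is a GRing.unit) /\
  (forall a b, a \in T -> b \in T -> a != b -> (a - b) \is a GRing.unit).

Definition well_conditioned (A : {set R}) : Prop :=
  subtractive A \/
  exists2 a, a \in A & subtractive (A :\ a) /\ (zero_divisor a \/ a = 0).

Definition in_FA (l : nat) (Ablk : 'I_l -> {set R}) (f : {poly R}) : Prop :=
  (size f <= #|\bigcup_(i < l) Ablk i|)%N /\
  forall i x y, x \in Ablk i -> y \in Ablk i -> f.[x] = f.[y].

Definition in_FAr (l r : nat) (Ablk : 'I_l -> {set R}) (f : {poly R}) : Prop :=
  exists fs : 'I_r -> {poly R},
    (forall i, in_FA Ablk (fs i)) /\ f = \sum_(i < r) fs i * 'X^i.

Definition eval_word (A : {set R}) (f : {poly R}) : 'rV[R]_#|A| :=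
  \row_(k < #|A|) f.[enum_val k].

Definition hamming (n : nat) (c1 c2 : 'rV[R]_n) : nat :=
  #|[set k : 'I_n | c1 0 k != c2 0 k]|.

End ChainRing.

(* Main.v *)
Require Import Defs.
From HB Require Import structures.
From mathcomp Require Import all_boot all_order all_algebra.
From mathcomp Require Import zify.
From Stdlib Require Import Classical.
Import Order.TTheory GRing.Theory Num.Theory.
Local Open Scope ring_scope.

Lemma ideal_ext (R : finComUnitRingType) (k : nat) (I : {set R}) :
  (#|~: I| <= k)%N -> is_ideal I -> I != setT ->
  exists M, is_maximal_ideal M /\ I \subset M.
Proof.
elim: k I => [|k IH] I hk hI hT.
  move: hk; rewrite leqn0 cards_eq0 => /eqP E.
  by rewrite -(setCK I) E setC0 eqxx in hT.
case: (classic (is_maximal_ideal I)) => [hM|hM]; first by exists I.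
have [J [hJ [sIJ [nJI nJT]]]] : exists J, is_ideal J /\ I \subset J /\ J <> I /\ J <> setT.
  apply: NNPP => hn; apply: hM; split => // J hJ sIJ.
  case: (classic (J = I)) => [|hJI]; first by left.
  case: (classic (J = setT)) => [|hJT]; first by right.
  by exfalso; apply: hn; exists J.
have pIJ : I \proper J.
  by rewrite properEneq sIJ andbT; apply/eqP => E; apply: nJI.
have hc := proper_card pIJ; have c1 := cardsC I; have c2 := cardsC J.
have [M [hM' sJM]] : exists M, is_maximal_ideal M /\ J \subset M.
  apply: IH hJ _; last by apply/eqP.
  by lia.
by exists M; split => //; apply: subset_trans sIJ sJM.
Qed.

Lemma nonunit_in_max (R : finComUnitRingType) (hR : chain_ring R) (x : R) :
  x \isn't a GRing.unit -> exists M, is_maximal_ideal M /\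
     (forall M', is_maximal_ideal M' -> M' = M) /\ x \in M.
Proof.
move=> hx; case: hR => [[M [hM huniq]] _].
pose I := [set x * c | c : R].
have hI : is_ideal I.
  split.
  - by apply/imsetP; exists 0 => //; rewrite mulr0.
  - move=> a b /imsetP[c _ ->] /imsetP[d _ ->]; apply/imsetP; exists (c + d) => //.
    by rewrite mulrDr.
  - move=> c a /imsetP[d _ ->]; apply/imsetP; exists (c * d) => //.
    by rewrite mulrCA.
have hT : I != setT.
  apply/negP => /eqP E; have : (1 : R) \in I by rewrite E inE.
  case/imsetP => c _ h; apply: (negP hx); apply/unitrP; exists c.
  by rewrite mulrC -h.
have [M' [hM' sIM']] := @ideal_ext R _ I (leqnn _) hI hT.
have E := huniq _ hM'; subst M'.
exists M; split => //; split => //.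
by apply: (subsetP sIM'); apply/imsetP; exists 1 => //; rewrite mulr1.
Qed.

Lemma zd_sub_unit (R : finComUnitRingType) (hR : chain_ring R) (a b : R) :
  (zero_divisor a \/ a = 0) -> b \is a GRing.unit -> (a - b) \is a GRing.unit.
Proof.
move=> ha hb; apply: NNPP => /negP hab.
have [M [[[h0 hadd hmul] hMT _] [huniq habM]]] := @nonunit_in_max R hR _ hab.
have [M2 [hM2 [_ haM]]] : exists M, is_maximal_ideal M /\
     (forall M', is_maximal_ideal M' -> M' = M) /\ a \in M.
  apply: (@nonunit_in_max R hR); apply/negP => ua.
  case: ha => [[c hc hac]|E]; last by rewrite E unitr0 in ua.
  by move: hc; rewrite -[c](mulKr ua) hac mulr0 eqxx.
have E := huniq _ hM2; subst M2.
have hbM : b \in M.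
  have -> : b = a + (-1) * (a - b) by rewrite mulN1r opprB addrC subrK.
  by apply: hadd => //; apply: hmul.
apply: (negP hMT); apply/eqP/setP => z; rewrite inE.
have -> : z = (z * b^-1) * b by rewrite mulrVK.
by apply: hmul.
Qed.

Lemma wc_units (R : finComUnitRingType) (hR : chain_ring R) (A : {set R}) :
  well_conditioned A -> forall x y, x \in A -> y \in A -> x != y ->
  (x - y) \is a GRing.unit.
Proof.
case=> [[_ h] //|[a aA [[hu hd] hz]]] x y xA yA nxy.
have inD : forall z, z \in A -> z != a -> z \in A :\ a.
  by move=> z zA za; rewrite !inE za.
case: (eqVneq x a) => [xa|xa].
  rewrite xa in nxy *; apply: (@zd_sub_unit R hR a y hz); apply: hu; apply: inD => //.
  by rewrite eq_sym.
case: (eqVneq y a) => [ya|ya].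
  rewrite ya in nxy *; rewrite -opprB unitrN; apply: (@zd_sub_unit R hR a x hz).
  by apply: hu; apply: inD.
by apply: hd => //; apply: inD.
Qed.

Lemma uniq_roots_of (R : finComUnitRingType) (s : seq R) : uniq s ->
  (forall x y, x \in s -> y \in s -> x != y -> (x - y) \is a GRing.unit) ->
  uniq_roots s.
Proof.
elim: s => //= x s IH /andP[xs us] h; apply/andP; split.
  apply/allP => y ys; rewrite /diff_roots mulrC eqxx /=.
  apply: (h y x); rewrite ?inE ?eqxx ?ys ?orbT //.
  by apply: contraNneq xs => <-.
apply: IH => // a b ay by_ nab; apply: h => //; by rewrite inE ?ay ?by_ orbT.
Qed.

Lemma root_count (R : finComUnitRingType) (A : {set R})
  (hA : forall x y, x \in A -> y \in A -> x != y -> (x - y) \is a GRing.unit)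
  (f : {poly R}) : f != 0 -> (#|[set x in A | f.[x] == 0%R]| < size f)%N.
Proof.
move=> nz; rewrite cardE; apply: max_ring_poly_roots => //.
  by apply/allP => x; rewrite mem_enum inE => /andP[_ /eqP]; rewrite /root => ->.
apply: uniq_roots_of; first exact: enum_uniq.
move=> x y; rewrite !mem_enum !inE => /andP[xA _] /andP[yA _]; exact: hA.
Qed.

Lemma size_sum_le (R : nzRingType) k (F : 'I_k -> {poly R}) m :
  (forall i, (size (F i) <= m)%N) -> (size (\sum_(i < k) F i)%R <= m)%N.
Proof.
move=> h; elim/big_ind: _ => //; first by rewrite size_poly0.
move=> p q hp hq; apply: leq_trans (size_polyD _ _) _; by rewrite geq_max hp hq.
Qed.
Theorem mainTheorem11
  (R : finComUnitRingType) (hR : chain_ring R)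
  (r l : nat) (hr : (1 <= r)%N)
  (Ablk : 'I_l -> {set R})
  (hsize : forall i, #|Ablk i| = r.+1)
  (hdisj : forall i j, i != j -> [disjoint Ablk i & Ablk j])
  (hwc : well_conditioned (\bigcup_(i < l) Ablk i))
  (g : {poly R}) (hg : in_FA Ablk g) (hdeg : size g = r.+2)
  (hspan : forall f, in_FA Ablk f ->
             exists c : 'I_l -> R, f = \sum_(i < l) c i *: g ^+ i)
  (t : nat) (ht : (1 <= t <= l)%N)
  (Phi : {linear 'rV[R]_(r * t) -> {poly R}})
  (hinj : injective Phi)
  (himg : forall a, in_FAr r Ablk (Phi a)) :
  let A := \bigcup_(i < l) Ablk i in
  let n := #|A| in
  let K := (r * t)%N in
  let inC := fun c : 'rV[R]_n => exists a, c = eval_word A (Phi a) in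
  (* C is an R-linear code of length n *)
  [/\ (forall c1 c2, inC c1 -> inC c2 -> inC (c1 + c2)),
      (forall (x : R) c, inC c -> inC (x *: c)),
  (* C is free of rank K *)
      (exists b : 'I_K -> 'rV[R]_n,
         (forall k, inC (b k)) /\
         forall c, inC c -> exists! coef : 'rV[R]_K,
             c = \sum_(k < K) coef 0 k *: b k),
  (* locality r: each coordinate alpha in A_j is determined by A_j \ {alpha} *)
      (forall j alpha, alpha \in Ablk j -> forall a a',
         (forall beta, beta \in Ablk j :\ alpha -> (Phi a).[beta] = (Phi a').[beta]) ->
         (Phi a).[alpha] = (Phi a').[alpha]) &
  (* minimum distance bound *)
      (forall c1 c2, inC c1 -> inC c2 -> c1 != c2 ->
         (n - \max_(a : 'rV[R]_K | a != 0%R) (size (Phi a)).-1 <= hamming c1 c2)%N)].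
  (* your proof *)
Proof.
move=> A n K inC.
have hl : (0 < l)%N by case/andP: ht => h1 h2; apply: leq_trans h1 h2.
have hn : n = (r.+1 * l)%N.
  rewrite /n /A -sum1_card partition_disjoint_bigcup //.
  rewrite (eq_bigr (fun=> r.+1)) => [|i _]; last by rewrite sum1_card hsize.
  by rewrite sum_nat_const card_ord mulnC.
have hU := @wc_units R hR A hwc.
have hszA : forall f, in_FAr r Ablk f -> (size f < n)%N.
  move=> f [fs [hfs ->]].
  apply: (@leq_ltn_trans (r.+1 * l.-1 + r)); last by rewrite hn; nia.
  apply: size_sum_le => i.
  have [c ->] := hspan _ (hfs i).
  apply: leq_trans (size_polyMleq _ _) _; rewrite size_polyXn.
  have : (size (\sum_(j < l) c j *: g ^+ j)%R <= (r.+1 * l.-1).+1)%N.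
    apply: size_sum_le => j; apply: leq_trans (size_scale_leq _ _) _.
    apply: leq_trans (size_poly_exp_leq _ _) _; rewrite hdeg /= ltnS leq_mul2l.
    by rewrite -ltnS prednK // ltn_ord orbT.
  have := ltn_ord i; move: (nat_of_ord i) (size _) => m s; lia.
have evD : forall f h, eval_word A (f + h) = eval_word A f + eval_word A h.
  by move=> f h; apply/rowP => k; rewrite !mxE hornerD.
have evZ : forall (x : R) f, eval_word A (x *: f) = x *: eval_word A f.
  by move=> x f; apply/rowP => k; rewrite !mxE hornerZ.
have ev0 : eval_word A 0 = 0 by apply/rowP => k; rewrite !mxE horner0.
have evB : forall f h, eval_word A (f - h) = eval_word A f - eval_word A h.
  move=> f h; rewrite evD; congr (_ + _).
  by rewrite -scaleN1r evZ scaleN1r.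
have evAt : forall f x (xA : x \in A), f.[x] = eval_word A f 0 (enum_rank_in xA x).
  by move=> f x xA; rewrite mxE enum_rankK_in.
have hker : forall a, eval_word A (Phi a) = 0 -> a = 0.
  move=> a E; apply/eqP; apply: contraT => nz.
  have nzf : Phi a != 0.
    by apply: contra nz => /eqP h; apply/eqP; apply: hinj; rewrite h linear0.
  have := @root_count R A hU _ nzf.
  have -> : [set x in A | (Phi a).[x] == 0%R] = A.
    apply/setP => x; rewrite inE; case xA: (x \in A) => //=.
    by rewrite (evAt _ _ xA) E mxE eqxx.
  by rewrite -/n ltnNge ltnW // hszA.
have evS : forall v : 'rV[R]_K,
    (\sum_(k < K) v 0 k *: eval_word A (Phi (delta_mx 0 k)))%R = eval_word A (Phi v).
  move=> v; rewrite [in RHS](row_sum_delta v) linear_sum.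
  rewrite (big_morph (eval_word A) evD ev0); apply: eq_bigr => k _.
  by rewrite linearZ evZ.
split.
- move=> c1 c2 [a1 ->] [a2 ->]; exists (a1 + a2); by rewrite linearD evD.
- move=> x c [a ->]; exists (x *: a); by rewrite linearZ evZ.
- exists (fun k => eval_word A (Phi (delta_mx 0 k))); split.
    by move=> k; exists (delta_mx 0 k).
  move=> c [a ->]; exists a; split; first by rewrite evS.
  move=> v; rewrite evS => E; apply/eqP; rewrite -subr_eq0; apply/eqP.
  by apply: hker; rewrite linearB evB E subrr.
- move=> j alpha aj a a' hloc.
  apply/eqP; rewrite -subr_eq0 -hornerN -hornerD -linearB.
  have [fs [hfs Ef]] := himg (a - a').
  set f := Phi (a - a') in Ef *.
  pose h := (\sum_(i < r) (fs i).[alpha] *: 'X^i)%R.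
  have hfh : forall beta, beta \in Ablk j -> f.[beta] = h.[beta].
    move=> beta bj; rewrite Ef /h !horner_sum; apply: eq_bigr => i _.
    by rewrite hornerM hornerZ !hornerXn ((hfs i).2 j beta alpha bj aj).
  rewrite (hfh _ aj); suff -> : h = 0 by rewrite horner0.
  apply/eqP; apply: contraT => nzh.
  have sAj : Ablk j \subset A by apply: (bigcup_sup j).
  have hUB : forall x y, x \in Ablk j :\ alpha -> y \in Ablk j :\ alpha -> x != y ->
      (x - y) \is a GRing.unit.
    move=> x y; rewrite !inE => /andP[_ xj] /andP[_ yj]; apply: hU.
      exact: (subsetP sAj).
    exact: (subsetP sAj).
  have := @root_count R _ hUB _ nzh.
  have -> : [set x in Ablk j :\ alpha | h.[x] == 0%R] = Ablk j :\ alpha.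
    apply/setP => x; rewrite inE; case xB: (x \in Ablk j :\ alpha) => //=.
    move: (xB); rewrite inE => /andP[_ xj].
    rewrite -hfh // /f linearB hornerD hornerN (hloc x xB) subrr eqxx //.
  have hB : #|Ablk j :\ alpha| = r.
    have := cardsD1 alpha (Ablk j); rewrite aj hsize /=; lia.
  rewrite hB ltnNge => /negP[].
  apply: size_sum_le => i; apply: leq_trans (size_scale_leq _ _) _.
  by rewrite size_polyXn ltn_ord.
- move=> c1 c2 [a1 E1] [a2 E2] nc.
  set a := a1 - a2.
  have nza : a != 0.
    apply: contra nc => /eqP h; apply/eqP.
    by rewrite E1 E2; move/eqP: h; rewrite subr_eq0 => /eqP ->.
  set f := Phi a.
  have nzf : f != 0.
    by apply: contra nza => /eqP h; apply/eqP; apply: hinj; rewrite linear0; exact: h.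
  set Z := [set x in A | f.[x] == 0%R].
  have hZ := @root_count R A hU _ nzf; rewrite -/Z in hZ.
  have hmax : (#|Z| <= \max_(b : 'rV[R]_K | b != 0%R) (size (Phi b)).-1)%N.
    apply: leq_trans (@leq_bigmax_cond _ (fun b : 'rV[R]_K => b != 0%R) (fun b => (size (Phi b)).-1) a nza); rewrite -/f /=.
    by rewrite -ltnS prednK // (leq_ltn_trans _ hZ).
  set S := [set k : 'I_n | c1 0 k != c2 0 k].
  have hSC : (#|~: S| <= #|Z|)%N.
    rewrite -(card_imset _ enum_val_inj); apply: subset_leq_card.
    apply/subsetP => _ /imsetP[k kS ->].
    rewrite !inE enum_valP /=; move: kS; rewrite !inE negbK E1 E2 !mxE.
    by rewrite /f /a linearB hornerD hornerN subr_eq0.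
  have := cardsC S; rewrite card_ord /hamming -/S => hc.
  rewrite -/n in hc; lia.
Qed.
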